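(* Let $(R,\mathfrak m,k)$ be a one-dimensional analytically irreducible local domain with canonical map $k\to\overline R/\mathfrak n$ an isomorphism, with $v,a_i,n,I_i$ as in the context, and let $1\le i\le n-2$. The following are equivalent: (1) for every $r\in R$ with $v(r)=a_i$, $I_iI_{i+2}=rI_{i+2}$; (2) there exists $q\in R$ with $v(q)=a_i$ and $I_iI_{i+2}=qI_{i+2}$. If moreover $i\le n-3$ and $s\in R$ is an element with $v(s)=a_{i+1}$ and $I_{i+1}I_{i+3}=sI_{i+3}$, then (1) and (2) are also equivalent to: (3) there exists $q\in R$ with $v(q)=a_i$ and $sI_{i+2}\subseteq (q)$.
   Context: $\overline R$ is the integral closure of $R$ in $Q(R)$, assumed finitely generated over $R$ and local with maximal ideal $\mathfrak n$; $v$ is the normalized valuation of $\overline R$; $v(R)=\{a_0=0<a_1<\cdots\}$; $n$ is the smallest integer with $a_{n+i}=a_n+i$ for all $i\ge 0$; $I_j=\{r\in R\mid v(r)\ge a_j\}$ for $0\le j\le n$. *)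

(* Defs.v *)
(* Subrings R of a field K are Prop-valued subsets of K. *)
From mathcomp Require Import all_boot all_order all_algebra.
Set Implicit Arguments. Unset Strict Implicit. Unset Printing Implicit Defensive.
Import Order.TTheory GRing.Theory Num.Theory.
Local Open Scope ring_scope.

Section Defs.
Variable K : fieldType.

Definition is_subring (R : K -> Prop) : Prop :=
  [/\ R 1, (forall x y, R x -> R y -> R (x - y)) & (forall x y, R x -> R y -> R (x * y))].

Definition is_fraction_field_of (R : K -> Prop) : Prop :=
  forall x, exists a b, [/\ R a, R b, b != 0 & x = a / b].

Definition nonunit_in (R : K -> Prop) (x : K) : Prop :=
  R x /\ ~ (exists y, R y /\ x * y = 1).

Definition is_local (R : K -> Prop) : Prop :=
  (forall x y, nonunit_in R x -> nonunit_in R y -> nonunit_in R (x + y)) /\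
  (forall x y, nonunit_in R x -> R y -> nonunit_in R (x * y)).

Definition integral_over (R : K -> Prop) (x : K) : Prop :=
  exists p : {poly K}, [/\ p \is monic, (forall j, R p`_j) & root p x].

Definition finitely_generated_over (R S : K -> Prop) : Prop :=
  exists (m : nat) (g : 'I_m -> K), (forall j, S (g j)) /\
    forall x, S x -> exists c : 'I_m -> K, (forall j, R (c j)) /\ x = \sum_(j < m) c j * g j.

(* v : K^* -> Z is a normalized (surjective) discrete valuation
   (its value at 0 is irrelevant). *)
Definition normalized_discrete_valuation (v : K -> int) : Prop :=
  [/\ (forall x y, x != 0 -> y != 0 -> v (x * y) = v x + v y),
      (forall x y z, x != 0 -> y != 0 -> x + y != 0 ->
          z <= v x -> z <= v y -> z <= v (x + y)) &
      (forall z : int, exists x, x != 0 /\ v x = z)].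

Definition val_ring (v : K -> int) (x : K) : Prop := x = 0 \/ 0 <= v x.
Definition val_max (v : K -> int) (x : K) : Prop := x = 0 \/ 0 < v x.

Definition Ival (R : K -> Prop) (v : K -> int) (a : nat -> int) (j : nat) (x : K) : Prop :=
  R x /\ (x = 0 \/ a j <= v x).

Definition ideal_mul (I J : K -> Prop) (x : K) : Prop :=
  exists (m : nat) (f g : 'I_m -> K),
    [/\ (forall j, I (f j)), (forall j, J (g j)) & x = \sum_(j < m) f j * g j].

Definition scale_set (r : K) (I : K -> Prop) (x : K) : Prop :=
  exists y, I y /\ x = r * y.

Definition set_eq (A B : K -> Prop) : Prop := forall x, A x <-> B x.
Definition set_sub (A B : K -> Prop) : Prop := forall x, A x -> B x.

End Defs.

Definition stable_from (a : nat -> int) (m : nat) : Prop :=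
  forall k : nat, a (m + k)%N = a m + k%:Z.

(* Main.v *)
Require Import Defs.
From mathcomp Require Import all_boot all_order all_algebra.
From mathcomp Require Import zify ring.
Import Order.TTheory GRing.Theory Num.Theory.
Local Open Scope ring_scope.

Set Implicit Arguments.

Lemma sub0 (K : fieldType) (R : K -> Prop) : is_subring R -> R 0.
Proof. by case=> R1 RB _; rewrite -(subrr 1); apply: RB. Qed.
Lemma subN (K : fieldType) (R : K -> Prop) : is_subring R -> forall x, R x -> R (- x).
Proof. move=> HR x Rx; rewrite -sub0r; case: (HR) => _ RB _; apply: RB => //; exact: sub0. Qed.
Lemma subD (K : fieldType) (R : K -> Prop) : is_subring R -> forall x y, R x -> R y -> R (x + y).
Proof. move=> HR x y Rx Ry; case: (HR) => _ RB _; have := RB x (- y) Rx (subN HR y Ry); by rewrite opprK. Qed.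
Lemma subM (K : fieldType) (R : K -> Prop) : is_subring R -> forall x y, R x -> R y -> R (x * y).
Proof. by case. Qed.
Lemma subS (K : fieldType) (R : K -> Prop) : is_subring R ->
  forall m (F : 'I_m -> K), (forall j, R (F j)) -> R (\sum_(j < m) F j).
Proof. move=> HR m F HF; apply: big_ind => //; [exact: sub0 | exact: subD]. Qed.

Lemma vM (K : fieldType) (v : K -> int) : normalized_discrete_valuation v ->
  forall {x y : K}, x != 0 -> y != 0 -> v (x * y) = v x + v y.
Proof. by case. Qed.
Lemma v1 (K : fieldType) (v : K -> int) : normalized_discrete_valuation v -> v 1 = 0.
Proof. move=> Hv; have h : v 1 = v 1 + v 1 by rewrite -(vM Hv) ?mulr1 // oner_neq0. lia. Qed.
Lemma vV (K : fieldType) (v : K -> int) : normalized_discrete_valuation v ->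
  forall {x : K}, x != 0 -> v x^-1 = - v x.
Proof.
move=> Hv x x0; have := vM Hv x0 (invr_neq0 x0); rewrite mulfV // v1 //; lia.
Qed.
Lemma vdiv (K : fieldType) (v : K -> int) : normalized_discrete_valuation v ->
  forall {x y : K}, x != 0 -> y != 0 -> v (x / y) = v x - v y.
Proof. move=> Hv x y x0 y0; rewrite vM ?invr_neq0 // vV //. Qed.

Lemma conductor (K : fieldType) (R : K -> Prop) (v : K -> int) :
  is_subring R -> is_fraction_field_of R -> normalized_discrete_valuation v ->
  finitely_generated_over R (val_ring v) ->
  exists D, forall z, z != 0 -> D <= v z -> R z.
Proof.
move=> HR HQ Hv [m [g [Hg Hgen]]].
have [d [Rd d0 Hd]] : exists d, [/\ R d, d != 0 & forall j : 'I_m, R (d * g j)].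
  suff: forall k, (k <= m)%N -> exists d, [/\ R d, d != 0 &
          forall j : 'I_m, (j < k)%N -> R (d * g j)].
    move/(_ m (leqnn m)) => [d [? ? H]]; exists d; split => // j; exact: H.
  elim => [|k IH] hk.
    exists 1; split; [by case: HR | exact: oner_neq0 | by move=> j; rewrite ltn0].
  have [d [Rd d0 H]] := IH (ltnW hk).
  have [a' [b [Ra Rb b0 e]]] := HQ (g (Ordinal hk)).
  exists (d * b); split; first exact: subM.
    by rewrite mulf_neq0.
  move=> j; rewrite ltnS leq_eqVlt => /orP [/eqP ej | jk].
    have -> : j = Ordinal hk by apply/val_inj.
    rewrite e -mulrA (mulrC b) divfK //; exact: subM.
  rewrite mulrAC; apply: subM => //; exact: H.
exists (v d) => z z0 hz.
have vr : val_ring v (z / d) by right; rewrite vdiv //; lia.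
have [c [Rc ezd]] := Hgen _ vr.
have -> : z = d * (z / d) by rewrite mulrC divfK.
rewrite ezd mulr_sumr; apply: subS => // j; rewrite mulrCA; apply: subM => //.
Qed.

Ltac fld := field; repeat (apply/andP; split); try done.

Theorem proposition3p4 (K : fieldType) (R : K -> Prop) (v : K -> int)
    (a : nat -> int) (n i : nat)
    (HR : is_subring R) (HQ : is_fraction_field_of R) (Hloc : is_local R)
    (Hv : normalized_discrete_valuation v)
    (Hbar : forall x, integral_over R x <-> val_ring v x)
    (Hfin : finitely_generated_over R (val_ring v))
    (Hres : forall x, val_ring v x -> exists r, R r /\ val_max v (x - r))
    (Ha_incr : forall j, a j < a j.+1)
    (Ha : forall z, (exists r, [/\ R r, r != 0 & v r = z]) <-> (exists j, a j = z))
    (Hn : stable_from a n /\ (forall m, stable_from a m -> (n <= m)%N))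
    (Hi1 : (1 <= i)%N) (Hi2 : (i + 2 <= n)%N) :
  let I := Ival R v a in
  ((forall r, R r -> r != 0 -> v r = a i ->
      set_eq (ideal_mul (I i) (I (i + 2)%N)) (scale_set r (I (i + 2)%N)))
   <->
   (exists q, [/\ R q, q != 0, v q = a i &
      set_eq (ideal_mul (I i) (I (i + 2)%N)) (scale_set q (I (i + 2)%N))]))
  /\
  ((i + 3 <= n)%N ->
   forall s, R s -> s != 0 -> v s = a i.+1 ->
   set_eq (ideal_mul (I i.+1) (I (i + 3)%N)) (scale_set s (I (i + 3)%N)) ->
   ((exists q, [/\ R q, q != 0, v q = a i &
      set_eq (ideal_mul (I i) (I (i + 2)%N)) (scale_set q (I (i + 2)%N))])
    <->
    (exists q, [/\ R q, q != 0, v q = a i &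
      set_sub (scale_set s (I (i + 2)%N)) (scale_set q R)]))).
Proof.
move=> I.
case: (HR) => R1 RB RMul.
have R0 := sub0 HR.
have RD := subD HR.
have vR : forall r, R r -> r != 0 -> 0 <= v r.
  move=> r Rr r0; have : val_ring v r.
    apply/Hbar; exists ('X - r%:P); split.
    - exact: monicXsubC.
    - move=> j; rewrite coefB coefX coefC; apply: RB.
        by case: (_ == _); rewrite /= ?mulr1n ?mulr0n.
      by case: (_ == _).
    - by rewrite root_XsubC eqxx.
  by case=> [r00|//]; rewrite r00 eqxx in r0.
have aR : forall r, R r -> r != 0 -> exists j, v r = a j.
  move=> r Rr r0; have [j ej] : exists j, a j = v r by apply/Ha; exists r.
  by exists j.
have amono : forall j d, a j < a (j + d.+1)%N.
  move=> j; elim=> [|d IH]; first by rewrite addn1.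
  rewrite addnS; exact: lt_trans IH (Ha_incr _).
have altn : forall j k, (j < k)%N -> a j < a k.
  move=> j k jk; have -> : k = (j + (k - j.+1).+1)%N by lia.
  exact: amono.
have aleq : forall j k, (j <= k)%N -> a j <= a k.
  move=> j k; rewrite leq_eqVlt => /orP [/eqP -> // | /altn /ltW //].
have anext : forall j r, R r -> r != 0 -> a j < v r -> a j.+1 <= v r.
  move=> j r Rr r0 h; have [k ek] := aR r Rr r0; rewrite ek in h *.
  case: (ltnP j k) => jk; first exact: aleq.
  by have := lt_le_trans h (aleq _ _ jk); rewrite ltxx.
have [D HD] := conductor HR HQ Hv Hfin.
have approx : forall x q, R x -> R q -> q != 0 -> x != 0 -> v x = v q ->
    exists l, R l /\ (x - l * q = 0 \/ v q < v (x - l * q)).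
  move=> x q Rx Rq q0 x0 e.
  have [l [Rl hl]] : exists l, R l /\ val_max v (x / q - l).
    by apply: Hres; right; rewrite vdiv // e subrr.
  exists l; split => //.
  have -> : x - l * q = (x / q - l) * q by rewrite mulrBl divfK.
  case: hl => [-> | h]; first by left; rewrite mul0r.
  have [z0|nz] := eqVneq (x / q - l) 0; first by left; rewrite z0 mul0r.
  right; rewrite vM //; lia.
have Isum : forall j m (F : 'I_m -> K), (forall k, I j (F k)) -> I j (\sum_(k < m) F k).
  move=> j m F HF; apply: (big_ind (I j)).
  - split; [exact R0 | by left].
  - move=> x y [Rx hx] [Ry hy]; split; first exact: RD.
    have [->|x0] := eqVneq x 0; first by rewrite add0r.
    have [->|y0] := eqVneq y 0; first by rewrite addr0.
    have [s0|s0] := eqVneq (x+y) 0; first by left.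
    right; case: hx => [/eqP|hx]; first by rewrite (negbTE x0).
    case: hy => [/eqP|hy]; first by rewrite (negbTE y0).
    case: Hv => _ Hu _; exact: Hu.
  - move=> k _; exact: HF.
have toP : forall j k q, R q -> q != 0 ->
    set_eq (ideal_mul (I j) (I k)) (scale_set q (I k)) ->
    forall x y, I j x -> I k y -> R (x * y / q).
  move=> j k q Rq q0 H x y Ix Iy.
  have : ideal_mul (I j) (I k) (x * y).
    by exists 1%N, (fun _ => x), (fun _ => y); split => //; rewrite big_ord1.
  by move/H => [z [[Rz _] ->]]; rewrite mulrC mulKf.
have fromP : forall q, R q -> q != 0 -> v q = a i ->
    (forall x y, I i x -> I (i+2)%N y -> R (x * y / q)) ->
    set_eq (ideal_mul (I i) (I (i+2)%N)) (scale_set q (I (i+2)%N)).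
  move=> q Rq q0 vq HP z; split.
  - case=> m [f [g [Hf Hg ->]]].
    exists (\sum_(j < m) (f j * g j / q)); split.
      apply: Isum => j; split; first exact: HP.
      have [f0|f0] := eqVneq (f j) 0; first by left; rewrite f0 !mul0r.
      have [g0|g0] := eqVneq (g j) 0; first by left; rewrite g0 mulr0 mul0r.
      right; case: (Hf j) => _ [/eqP|hf]; first by rewrite (negbTE f0).
      case: (Hg j) => _ [/eqP|hg]; first by rewrite (negbTE g0).
      rewrite vdiv ?mulf_neq0 // vM // vq; lia.
    rewrite mulr_sumr; apply: eq_bigr => j _; by rewrite [q * _]mulrC divfK.
  - case=> y [Iy ->]; exists 1%N, (fun _ => q), (fun _ => y); split => //; last by rewrite big_ord1.
    by move=> _; split => //; right; rewrite vq.
split.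
- split.
  + move=> H1; have [r [Rr r0 vr]] : exists r, [/\ R r, r != 0 & v r = a i] by apply/Ha; exists i.
    by exists r; split => //; exact: H1.
  + case=> q [Rq q0 vq Hq] r Rr r0 vr.
    have HPq := toP _ _ _ Rq q0 Hq.
    apply: fromP => //.
    have key : forall k y, I (i+2)%N y -> y != 0 -> D <= v y + k%:Z ->
        forall x, I i x -> R (x * y / r).
      elim=> [|k IH] y Iy y0 hy x Ix.
      * have [->|x0] := eqVneq x 0; first by rewrite !mul0r.
        apply: HD; first by rewrite mulf_neq0 ?invr_neq0 ?mulf_neq0.
        case: Ix => _ [/eqP|hx]; first by rewrite (negbTE x0).
        rewrite vdiv ?mulf_neq0 // vM // vr; lia.
      * have [l [Rl hl]] := approx q r Rq Rr r0 q0 (etrans vq (esym vr)).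
        have [hq|q'0] := eqVneq (q - l * r) 0.
          have eqq : q = l * r by apply/eqP; rewrite -subr_eq0 hq.
          have l0 : l != 0 by apply: contra_neq q0 => l0; rewrite eqq l0 mul0r.
          have -> : x * y / r = l * (x * y / q) by rewrite eqq; fld.
          by apply: RMul => //; apply: HPq => //.
        have hq : v r < v (q - l * r) by case: hl => // /eqP; rewrite (negbTE q'0).
        have Iq' : I i (q - l * r).
          split; first by apply: RB => //; apply: RMul.
          by right; apply: ltW; rewrite -vr.
        have Ry' : R ((q - l * r) * y / q) := HPq _ _ Iq' Iy.
        have y'0 : (q - l * r) * y / q != 0 by rewrite !mulf_neq0 ?invr_neq0.
        have vy' : v ((q - l * r) * y / q) = v (q - l * r) + v y - a i.
          by rewrite vdiv ?mulf_neq0 // vM // vq.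
        have Iy' : I (i+2)%N ((q - l * r) * y / q).
          split => //; right; case: (Iy) => _ [/eqP|h]; first by rewrite (negbTE y0).
          rewrite vy'; lia.
        have := IH _ Iy' y'0 _ x Ix.
        have -> : x * y / r = l * (x * y / q) + x * ((q - l * r) * y / q) / r by fld.
        move=> HI; apply: RD; first by apply: RMul => //; exact: HPq.
        apply: HI; rewrite vy'; lia.
    move=> x y Ix Iy.
    have [->|y0] := eqVneq y 0; first by rewrite mulr0 mul0r.
    apply: (key `|D - v y|%N y Iy y0) => //.
    rewrite abszE; have := ler_norm (D - v y); lia.
- move=> hi3 s Rs s0 vs Hs.
  have HQs := toP _ _ _ Rs s0 Hs.
  split.
  + case=> q [Rq q0 vq Hq]; exists q; split => //.
    move=> z [y [Iy ->]].
    have : ideal_mul (I i) (I (i+2)%N) (s * y).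
      exists 1%N, (fun _ => s), (fun _ => y); split => //; last by rewrite big_ord1.
      by move=> _; split => //; right; rewrite vs; apply: aleq.
    by move/Hq => [w [[Rw _] ->]]; exists w.
  + case=> q [Rq q0 vq Hsub]; exists q; split => //.
    apply: fromP => //.
    have T : forall x1 y, I i.+1 x1 -> I (i+2)%N y -> R (x1 * y / q).
      move=> x1 y Ix1 Iy.
      have [->|y0] := eqVneq y 0; first by rewrite mulr0 mul0r.
      have [w [Rw ew]] := Hsub (s * y) (ex_intro _ y (conj Iy erefl)).
      have ew' : w = s * y / q by rewrite ew mulrC mulKf.
      have w0 : w != 0 by rewrite ew' !mulf_neq0 ?invr_neq0.
      have Iw : I (i+3)%N w.
        split => //; right.
        have e3 : (i + 3 = (i+2).+1)%N by rewrite addnS.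
        rewrite e3; apply: anext => //.
        rewrite ew' vdiv ?mulf_neq0 // vM // vs vq.
        case: Iy => _ [/eqP|h]; first by rewrite (negbTE y0).
        have := altn i i.+1 (ltnSn i); lia.
      have := HQs x1 w Ix1 Iw.
      by have -> : x1 * w / s = x1 * y / q by rewrite ew'; fld.
    move=> x y Ix Iy.
    have [->|x0] := eqVneq x 0; first by rewrite !mul0r.
    case: (Ix) => Rx [/eqP|hx]; first by rewrite (negbTE x0).
    case: (boolP (a i < v x)) => hlt.
      by apply: T => //; split => //; right; exact: anext.
    have exq : v x = v q by rewrite vq; apply/eqP; rewrite eq_le hx andbT leNgt.
    have [l [Rl hl]] := approx x q Rx Rq q0 x0 exq.
    have -> : x * y / q = l * y + (x - l * q) * y / q by fld.
    apply: RD; first by apply: RMul => //; case: Iy.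
    have [->|x1] := eqVneq (x - l * q) 0; first by rewrite !mul0r.
    have hl' : v q < v (x - l * q) by case: hl => // /eqP; rewrite (negbTE x1).
    have Rx1 : R (x - l * q) by apply: RB => //; exact: RMul.
    apply: T => //; split => //; right; apply: anext => //; rewrite -vq //.
Qed.
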